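(* Let $(X,\le)$ be a globally hyperbolic poset. The set of closed intervals $\mathbf{I}X=\{[a,b]: a,b\in X,\ a\le b\}$, ordered by reverse inclusion ($[a,b]\sqsubseteq[c,d]$ iff $[c,d]\subseteq[a,b]$), is a continuous dcpo (domain), and its way-below relation is given by $[a,b]\ll[c,d]$ iff $a\ll c$ and $d\ll b$ (the latter computed in $(X,\le)$). The space $X$ (with its interval topology) has a countable basis iff $\mathbf{I}X$ is $\omega$-continuous. Finally, $\max(\mathbf{I}X)$, with the relative Scott topology inherited from $\mathbf{I}X$, is homeomorphic to $X$ with its interval topology (via $x\mapsto[x,x]$).
   Context: For a poset $(P,\sqsubseteq)$: a nonempty $S\subseteq P$ is directed if any two elements of $S$ have an upper bound in $S$, and filtered if any two have a lower bound in $S$; $\bigsqcup S$, $\bigwedge S$ denote supremum and infimum when they exist. For $x,y\in P$, $x\ll y$ iff for every directed $S\subseteq P$ that has a supremum, $y\sqsubseteq\bigsqcup S$ implies $x\sqsubseteq s$ for some $s\in S$. Put $\Downarrow x=\{a: a\ll x\}$, $\Uparrow x=\{a: x\ll a\}$. A basis of $P$ is a subset $B$ such that for every $x$, $B\cap\Downarrow x$ contains a directed set with supremum $x$; $P$ is continuous if it has a basis and $\omega$-continuous if it has a countable basis. A dcpo is a poset in which every directed set has a supremum; a continuous dcpo (domain) is a continuous poset that is a dcpo. $\max(P)=\{x: \text{there is no } y\neq x \text{ with } x\sqsubseteq y\}$. The Scott topology consists of upper sets $U$ such that for each directed $S$ with a supremum, $\bigsqcup S\in U$ implies $S\cap U\neq\emptyset$.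 A continuous poset $P$ is bicontinuous if (1) for all $x,y$: $x\ll y$ iff for every filtered $S\subseteq P$ having an infimum, $\bigwedge S\sqsubseteq x$ implies $s\sqsubseteq y$ for some $s\in S$; and (2) for every $x$, $\Uparrow x$ is filtered with infimum $x$. On a bicontinuous poset the sets $(a,b)=\{x:a\ll x\ll b\}$ form a basis for the interval topology. A globally hyperbolic poset is a bicontinuous poset $(X,\le)$ in which every closed interval $[a,b]=\{x:a\le x\le b\}$ is compact in the interval topology. *)

(* Defs.v *)
From Stdlib Require Import List.
Set Implicit Arguments.

Section Order.
Variable P : Type.
Variable le : P -> P -> Prop.

Record is_poset : Prop := {
  po_refl : forall x, le x x;
  po_antisym : forall x y, le x y -> le y x -> x = y;
  po_trans : forall x y z, le x y -> le y z -> le x z }.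

Definition directed (S : P -> Prop) : Prop :=
  (exists x, S x) /\
  forall x y, S x -> S y -> exists z, S z /\ le x z /\ le y z.

Definition filtered (S : P -> Prop) : Prop :=
  (exists x, S x) /\
  forall x y, S x -> S y -> exists z, S z /\ le z x /\ le z y.

Definition is_sup (S : P -> Prop) (s : P) : Prop :=
  (forall x, S x -> le x s) /\ (forall u, (forall x, S x -> le x u) -> le s u).

Definition is_inf (S : P -> Prop) (s : P) : Prop :=
  (forall x, S x -> le s x) /\ (forall u, (forall x, S x -> le u x) -> le u s).

Definition way_below (x y : P) : Prop :=
  forall S s, directed S -> is_sup S s -> le y s -> exists d, S d /\ le x d.

Definition is_basis (B : P -> Prop) : Prop :=
  forall x, exists S, (forall d, S d -> B d /\ way_below d x) /\
                      directed S /\ is_sup S x.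

Definition countable_set (B : P -> Prop) : Prop :=
  exists f : P -> nat, forall x y, B x -> B y -> f x = f y -> x = y.

Definition continuous_poset : Prop := exists B, is_basis B.

Definition omega_continuous : Prop := exists B, is_basis B /\ countable_set B.

Definition dcpo : Prop := forall S, directed S -> exists s, is_sup S s.

Definition domain : Prop := continuous_poset /\ dcpo.

Definition maximal (x : P) : Prop := forall y, le x y -> y = x.

Definition scott_open (U : P -> Prop) : Prop :=
  (forall x y, U x -> le x y -> U y) /\
  (forall S s, directed S -> is_sup S s -> U s -> exists d, S d /\ U d).

Definition bicontinuous : Prop :=
  continuous_poset /\
  (forall x y, way_below x y <->
     (forall S i, filtered S -> is_inf S i -> le i x -> exists s, S s /\ le s y)) /\
  (forall x, filtered (fun a => way_below x a) /\ is_inf (fun a => way_below x a) x).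

Definition interval_open (U : P -> Prop) : Prop :=
  forall x, U x -> exists a b, way_below a x /\ way_below x b /\
    (forall y, way_below a y -> way_below y b -> U y).

Definition closed_interval (a b : P) : P -> Prop := fun x => le a x /\ le x b.

End Order.
Arguments directed {P} le S.
Arguments filtered {P} le S.
Arguments is_sup {P} le S s.
Arguments is_inf {P} le S s.
Arguments way_below {P} le x y.
Arguments is_basis {P} le B.
Arguments countable_set {P} B.
Arguments continuous_poset {P} le.
Arguments omega_continuous {P} le.
Arguments dcpo {P} le.
Arguments domain {P} le.
Arguments maximal {P} le x.
Arguments scott_open {P} le U.
Arguments bicontinuous {P} le.
Arguments interval_open {P} le U.
Arguments closed_interval {P} le a b x.
Arguments is_poset {P} le.

Definition compact_in {T : Type} (opn : (T -> Prop) -> Prop) (K : T -> Prop) : Prop :=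
  forall F : (T -> Prop) -> Prop,
    (forall U, F U -> opn U) ->
    (forall x, K x -> exists U, F U /\ U x) ->
    exists l : list (T -> Prop), (forall U, In U l -> F U) /\
      (forall x, K x -> exists U, In U l /\ U x).

Definition second_countable {T : Type} (opn : (T -> Prop) -> Prop) : Prop :=
  exists B : nat -> T -> Prop, (forall n, opn (B n)) /\
    forall U x, opn U -> U x -> exists n, B n x /\ forall y, B n y -> U y.

Definition globally_hyperbolic {X : Type} (le : X -> X -> Prop) : Prop :=
  is_poset le /\ bicontinuous le /\
  forall a b, compact_in (interval_open le) (closed_interval le a b).

(* the interval poset IX: pairs (a,b) with a <= b, standing for [a,b] *)
Definition IX {X : Type} (le : X -> X -> Prop) : Type := { p : X * X | le (fst p) (snd p) }.

Definition ilo {X : Type} {le : X -> X -> Prop} (i : IX le) : X := fst (proj1_sig i).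
Definition ihi {X : Type} {le : X -> X -> Prop} (i : IX le) : X := snd (proj1_sig i).

Definition IX_le {X : Type} (le : X -> X -> Prop) (i j : IX le) : Prop :=
  forall x, closed_interval le (ilo j) (ihi j) x -> closed_interval le (ilo i) (ihi i) x.

Definition singleton_interval {X : Type} {le : X -> X -> Prop} (H : is_poset le) (x : X)
  : IX le := exist _ (x, x) (po_refl H x).
Arguments IX_le {X} le i j.

(* Main.v *)
Require Import Defs.
From Stdlib Require Import List Classical ClassicalEpsilon ProofIrrelevance Cantor.

Lemma fip {T : Type} (opn : (T -> Prop) -> Prop) (K : T -> Prop) :
  compact_in opn K -> forall F : (T -> Prop) -> Prop,
  (forall U, F U -> opn U) ->
  (forall l, (forall U, In U l -> F U) -> exists x, K x /\ forall U, In U l -> ~ U x) ->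
  exists x, K x /\ forall U, F U -> ~ U x.
Proof.
  intros HK F HF Hfip. apply NNPP; intro Hn.
  destruct (HK F HF) as [l [Hl Hcov]].
  - intros x Kx. apply NNPP; intro Hx. apply Hn. exists x; split; auto.
    intros U FU Ux. apply Hx. exists U; auto.
  - destruct (Hfip l Hl) as [x [Kx Hx]]. destruct (Hcov x Kx) as [U [HU Ux]].
    exact (Hx U HU Ux).
Qed.

Section GH.
Variable X : Type.
Variable le : X -> X -> Prop.
Hypothesis Hpo : is_poset le.
Hypothesis Hcont : continuous_poset le.
Hypothesis Hbc1 : forall x y, way_below le x y <->
     (forall S i, filtered le S -> is_inf le S i -> le i x -> exists s, S s /\ le s y).
Hypothesis Hbc2 : forall x, filtered le (fun a => way_below le x a) /\
                            is_inf le (fun a => way_below le x a) x.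
Hypothesis Hcpt : forall a b, compact_in (interval_open le) (closed_interval le a b).

Local Notation wb := (way_below le).
Let rf := po_refl Hpo.
Let tr := po_trans Hpo.
Let asy := po_antisym Hpo.

Lemma wb_le {x y} : wb x y -> le x y.
Proof.
  intros H. destruct (H (fun z => z = y) y) as [d [Hd Hxd]].
  - split. exists y; auto. intros a b -> ->. exists y; auto.
  - split. intros z ->; apply rf. intros u Hu; apply Hu; auto.
  - apply rf.
  - subst; auto.
Qed.

Lemma wb_le_trans {x y z} : wb x y -> le y z -> wb x z.
Proof. intros H Hyz S s HS Hs Hzs. apply (H S s HS Hs). eapply tr; eauto. Qed.

Lemma le_wb_trans {x y z} : le x y -> wb y z -> wb x z.
Proof. intros Hxy H S s HS Hs Hzs. destruct (H S s HS Hs Hzs) as [d [Hd Hyd]].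
  exists d; split; auto. eapply tr; eauto. Qed.

Lemma ddown x : directed le (fun a => wb a x) /\ is_sup le (fun a => wb a x) x.
Proof.
  destruct Hcont as [B HB]. destruct (HB x) as [D [HD1 [HD2 HD3]]]. split.
  - split.
    + destruct HD2 as [[d Hd] _]. exists d; apply HD1; auto.
    + intros a b Ha Hb.
      destruct (Ha D x HD2 HD3 (rf x)) as [d1 [Hd1 Ha1]].
      destruct (Hb D x HD2 HD3 (rf x)) as [d2 [Hd2 Hb2]].
      destruct (proj2 HD2 d1 d2 Hd1 Hd2) as [d3 [Hd3 [H13 H23]]].
      exists d3; split; [apply HD1; auto | split; eapply tr; eauto].
  - split.
    + intros a Ha; apply wb_le; auto.
    + intros u Hu. apply (proj2 HD3). intros d Hd. apply Hu. apply HD1; auto.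
Qed.

Lemma ex_below x : exists a, wb a x.
Proof. destruct (ddown x) as [[[a Ha] _] _]. eauto. Qed.
Lemma ex_above x : exists b, wb x b.
Proof. destruct (Hbc2 x) as [[[a Ha] _] _]. eauto. Qed.

Lemma interp_lo {a c} : wb a c -> exists z, wb a z /\ wb z c.
Proof.
  intros Hac.
  set (D' := fun e => exists d, wb d c /\ wb e d).
  assert (Hdir : directed le D').
  { split.
    - destruct (ex_below c) as [d Hd]. destruct (ex_below d) as [e He].
      exists e, d; auto.
    - intros e1 e2 [d1 [Hd1 He1]] [d2 [Hd2 He2]].
      destruct (proj2 (proj1 (ddown c)) d1 d2 Hd1 Hd2) as [d3 [Hd3 [H13 H23]]].
      destruct (ddown d3) as [Hdd Hds].
      destruct (wb_le_trans He1 H13 _ _ Hdd Hds (rf d3)) as [e1' [He1' H1']].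
      destruct (wb_le_trans He2 H23 _ _ Hdd Hds (rf d3)) as [e2' [He2' H2']].
      destruct (proj2 Hdd e1' e2' He1' He2') as [e3 [He3 [H1 H2]]].
      exists e3; split. exists d3; auto. split; eapply tr; eauto. }
  assert (Hsup : is_sup le D' c).
  { split.
    - intros e [d [Hd He]]. eapply tr; apply wb_le; eauto.
    - intros u Hu. apply (proj2 (proj2 (ddown c))). intros d Hd.
      apply (proj2 (proj2 (ddown d))). intros e He. apply Hu. exists d; auto. }
  destruct (Hac D' c Hdir Hsup (rf c)) as [e [[d [Hd Hed]] Hae]].
  exists d; split; auto. eapply le_wb_trans; eauto.
Qed.

Lemma interp_hi {x b} : wb x b -> exists z, wb x z /\ wb z b.
Proof.
  intros Hxb.
  set (F' := fun f => exists g, wb x g /\ wb g f).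
  assert (Hfil : filtered le F').
  { split.
    - destruct (ex_above x) as [g Hg]. destruct (ex_above g) as [f Hf].
      exists f, g; auto.
    - intros f1 f2 [g1 [Hg1 Hf1]] [g2 [Hg2 Hf2]].
      destruct (proj2 (proj1 (Hbc2 x)) g1 g2 Hg1 Hg2) as [g3 [Hg3 [H31 H32]]].
      destruct (Hbc2 g3) as [Hf3 Hi3].
      destruct (proj1 (Hbc1 g3 f1) (le_wb_trans H31 Hf1) _ _ Hf3 Hi3 (rf g3)) as [s1 [Hs1 Hs1f]].
      destruct (proj1 (Hbc1 g3 f2) (le_wb_trans H32 Hf2) _ _ Hf3 Hi3 (rf g3)) as [s2 [Hs2 Hs2f]].
      destruct (proj2 Hf3 s1 s2 Hs1 Hs2) as [s3 [Hs3 [H1 H2]]].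
      exists s3; split. exists g3; auto. split; [apply (tr _ s1); auto | apply (tr _ s2); auto]. }
  assert (Hinf : is_inf le F' x).
  { split.
    - intros f [g [Hg Hf]]. eapply tr; apply wb_le; eauto.
    - intros u Hu. apply (proj2 (proj2 (Hbc2 x))). intros g Hg.
      apply (proj2 (proj2 (Hbc2 g))). intros f Hf. apply Hu. exists g; auto. }
  destruct (proj1 (Hbc1 x b) Hxb F' x Hfil Hinf (rf x)) as [f [[g [Hg Hgf]] Hfb]].
  exists g; split; auto. eapply wb_le_trans; eauto.
Qed.

Lemma iopen_ext (U V : X -> Prop) : (forall x, U x <-> V x) -> interval_open le V -> interval_open le U.
Proof.
  intros HUV HV x Ux. destruct (HV x (proj1 (HUV x) Ux)) as [a [b [H1 [H2 H3]]]].
  exists a, b; repeat split; auto. intros y Hy1 Hy2. apply HUV; auto.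
Qed.

Lemma closed_up y : interval_open le (fun x => ~ le y x).
Proof.
  intros x Hx.
  assert (exists b, wb x b /\ ~ le y b) as [b [Hxb Hyb]].
  { apply NNPP; intro Hn. apply Hx. apply (proj2 (proj2 (Hbc2 x))).
    intros b Hb. apply NNPP; intro Hyb. apply Hn; eauto. }
  destruct (ex_below x) as [a Ha]. exists a, b; repeat split; auto.
  intros z _ Hz Hyz. apply Hyb. eapply tr; [exact Hyz| apply wb_le; auto].
Qed.

Lemma closed_down y : interval_open le (fun x => ~ le x y).
Proof.
  intros x Hx.
  assert (exists a, wb a x /\ ~ le a y) as [a [Hax Hay]].
  { apply NNPP; intro Hn. apply Hx. apply (proj2 (proj2 (ddown x))).
    intros a Ha. apply NNPP; intro Hay. apply Hn; eauto. }
  destruct (ex_above x) as [b Hb]. exists a, b; repeat split; auto.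
  intros z Hz _ Hzy. apply Hay. eapply tr; [apply wb_le; exact Hz| auto].
Qed.

Lemma sup_exists (L : X -> Prop) b : directed le L -> (forall l, L l -> le l b) ->
  exists p, is_sup le L p.
Proof.
  intros HL Hb. destruct (proj1 HL) as [l0 Hl0].
  set (F := fun U : X -> Prop => (exists l, L l /\ forall x, U x <-> ~ le l x) \/
                     (exists u, (forall l, L l -> le l u) /\ forall x, U x <-> ~ le x u)).
  assert (Hmono : forall U x z, F U -> ~ U x -> le x z -> L z -> ~ U z).
  { intros U x z [[l [Hl HU]] | [u [Hu HU]]] Hx Hxz Lz Uz.
    - apply Hx. apply HU. intro Hlx. apply (proj1 (HU z) Uz). eapply tr; eauto.
    - apply (proj1 (HU z) Uz). apply Hu; auto. }
  destruct (@fip X (interval_open le) (closed_interval le l0 b) (Hcpt l0 b) F) as [p [Kp Hp]].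
  - intros U [[l [Hl HU]] | [u [Hu HU]]]; [exact (iopen_ext _ _ HU (closed_up l)) | exact (iopen_ext _ _ HU (closed_down u))].
  - intros lst Hin.
    assert (exists x, L x /\ le l0 x /\ forall U, In U lst -> ~ U x) as [x [Lx [Hl0x Hx]]].
    { induction lst as [|U rest IH].
      - exists l0; split; [auto | split; [apply rf | intros U0 []]].
      - destruct IH as [x [Lx [Hl0x Hx]]]. intros V HV; apply Hin; simpl; auto.
        assert (FU : F U) by (apply Hin; simpl; auto).
        destruct FU as [[l [Hl HU]] | [u [Hu HU]]].
        + destruct (proj2 HL x l Lx Hl) as [z [Lz [Hxz Hlz]]].
          exists z; split; [auto | split; [apply (tr _ x); assumption | ]].
          intros V [<-|HV].
          * intro Uz. exact (proj1 (HU z) Uz Hlz).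
          * apply (Hmono V x z); [apply Hin; right; exact HV | apply Hx; exact HV | assumption | assumption].
        + exists x; split; [auto | split; [auto | ]].
          intros V [<-|HV].
          * intro Ux. apply (proj1 (HU x) Ux). apply Hu; auto.
          * apply Hx; exact HV. }
    exists x; split; auto. split; auto.
  - exists p; split.
    + intros l Hl. apply NNPP; intro Hn. apply (Hp (fun x => ~ le l x)); auto.
      left; exists l; split; auto; tauto.
    + intros u Hu. apply NNPP; intro Hn. apply (Hp (fun x => ~ le x u)); auto.
      right; exists u; split; auto; tauto.
Qed.

Lemma inf_exists (H : X -> Prop) a : filtered le H -> (forall h, H h -> le a h) ->
  exists q, is_inf le H q.
Proof.
  intros HH Ha. destruct (proj1 HH) as [h0 Hh0].
  set (F := fun U : X -> Prop => (exists h, H h /\ forall x, U x <-> ~ le x h) \/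
                     (exists w, (forall h, H h -> le w h) /\ forall x, U x <-> ~ le w x)).
  assert (Hmono : forall U x z, F U -> ~ U x -> le z x -> H z -> ~ U z).
  { intros U x z [[h [Hh HU]] | [w [Hw HU]]] Hx Hzx Hz Uz.
    - apply Hx. apply HU. intro Hxh. apply (proj1 (HU z) Uz). eapply tr; eauto.
    - apply (proj1 (HU z) Uz). apply Hw; auto. }
  destruct (@fip X (interval_open le) (closed_interval le a h0) (Hcpt a h0) F) as [p [Kp Hp]].
  - intros U [[l [Hl HU]] | [u [Hu HU]]]; [exact (iopen_ext _ _ HU (closed_down l)) | exact (iopen_ext _ _ HU (closed_up u))].
  - intros lst Hin.
    assert (exists x, H x /\ le x h0 /\ forall U, In U lst -> ~ U x) as [x [Hx0 [Hxh0 Hx]]].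
    { induction lst as [|U rest IH].
      - exists h0; split; [auto | split; [apply rf | intros U0 []]].
      - destruct IH as [x [Hxx [Hxh0 Hx]]]. intros V HV; apply Hin; simpl; auto.
        assert (FU : F U) by (apply Hin; simpl; auto).
        destruct FU as [[h [Hh HU]] | [w [Hw HU]]].
        + destruct (proj2 HH x h Hxx Hh) as [z [Hz [Hzx Hzh]]].
          exists z; split; [exact Hz | split; [apply (tr _ x); assumption | ]].
          intros V [<-|HV].
          * intro Uz. exact (proj1 (HU z) Uz Hzh).
          * apply (Hmono V x z); [apply Hin; right; exact HV | apply Hx; exact HV | assumption | assumption].
        + exists x; split; [auto | split; [auto | ]].
          intros V [<-|HV].
          * intro Ux. apply (proj1 (HU x) Ux). apply Hw; auto.
          * apply Hx; exact HV. }
    exists x; split; auto. split; auto.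
  - exists p; split.
    + intros h Hh. apply NNPP; intro Hn. apply (Hp (fun x => ~ le x h)); auto.
      left; exists h; split; auto; tauto.
    + intros u Hu. apply NNPP; intro Hn. apply (Hp (fun x => ~ le u x)); auto.
      right; exists u; split; auto; tauto.
Qed.

Local Notation I := (IX le).
Local Notation ile := (IX_le le).

Lemma lohi (i : I) : le (ilo i) (ihi i).
Proof. exact (proj2_sig i). Qed.

Definition mkI {a b : X} (h : le a b) : I := exist _ (a, b) h.

Lemma IX_le_iff (i j : I) : ile i j <-> le (ilo i) (ilo j) /\ le (ihi j) (ihi i).
Proof.
  split.
  - intros H. split.
    + apply (H (ilo j)). split; [apply rf | apply lohi].
    + apply (H (ihi j)). split; [apply lohi | apply rf].
  - intros [H1 H2] x [Hx1 Hx2]. split; eapply tr; eauto.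
Qed.

Lemma IX_eq (i j : I) : ilo i = ilo j -> ihi i = ihi j -> i = j.
Proof.
  destruct i as [[a b] p], j as [[c d] q]. unfold ilo, ihi; simpl. intros -> ->.
  f_equal. apply proof_irrelevance.
Qed.

Definition LO (S : I -> Prop) : X -> Prop := fun x => exists i, S i /\ ilo i = x.
Definition HI (S : I -> Prop) : X -> Prop := fun x => exists i, S i /\ ihi i = x.

Lemma LO_dir {S} : directed ile S -> directed le (LO S).
Proof.
  intros [[i Hi] HS]. split. exists (ilo i), i; auto.
  intros x y [i1 [H1 <-]] [i2 [H2 <-]].
  destruct (HS i1 i2 H1 H2) as [k [Hk [H1k H2k]]].
  apply IX_le_iff in H1k. apply IX_le_iff in H2k.
  exists (ilo k); split. exists k; auto. tauto.
Qed.

Lemma HI_fil {S} : directed ile S -> filtered le (HI S).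
Proof.
  intros [[i Hi] HS]. split. exists (ihi i), i; auto.
  intros x y [i1 [H1 <-]] [i2 [H2 <-]].
  destruct (HS i1 i2 H1 H2) as [k [Hk [H1k H2k]]].
  apply IX_le_iff in H1k. apply IX_le_iff in H2k.
  exists (ihi k); split. exists k; auto. tauto.
Qed.

Lemma LO_HI {S} : directed ile S -> forall x y, LO S x -> HI S y -> le x y.
Proof.
  intros [_ HS] x y [i1 [H1 <-]] [i2 [H2 <-]].
  destruct (HS i1 i2 H1 H2) as [k [Hk [H1k H2k]]].
  apply IX_le_iff in H1k. apply IX_le_iff in H2k.
  apply (tr _ (ilo k)); [tauto|]. apply (tr _ (ihi k)); [apply lohi | tauto].
Qed.

Lemma dcpo_comp {S} : directed ile S ->
  exists p q (Hpq : le p q), is_sup le (LO S) p /\ is_inf le (HI S) q /\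
     is_sup ile S (mkI Hpq).
Proof.
  intros HS. destruct (proj1 HS) as [i0 Hi0].
  destruct (sup_exists (LO S) (ihi i0) (LO_dir HS)) as [p Hp].
  { intros l Hl. apply (LO_HI HS); auto. exists i0; auto. }
  destruct (inf_exists (HI S) (ilo i0) (HI_fil HS)) as [q Hq].
  { intros h Hh. apply (LO_HI HS); auto. exists i0; auto. }
  assert (Hpq : le p q).
  { apply (proj2 Hq). intros h Hh. apply (proj2 Hp). intros l Hl. apply (LO_HI HS); auto. }
  exists p, q, Hpq. split; [auto | split; [auto |]]. split.
  - intros i Hi. apply IX_le_iff. unfold mkI, ilo, ihi; simpl. split.
    + apply (proj1 Hp). exists i; auto.
    + apply (proj1 Hq). exists i; auto.
  - intros u Hu. apply IX_le_iff. unfold mkI at 1; unfold ilo at 1, ihi at 2; simpl. split.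
    + apply (proj2 Hp). intros l [i [Hi <-]]. exact (proj1 (proj1 (IX_le_iff _ _) (Hu i Hi))).
    + apply (proj2 Hq). intros h [i [Hi <-]]. exact (proj2 (proj1 (IX_le_iff _ _) (Hu i Hi))).
Qed.

Lemma sup_comp {S s} : directed ile S -> is_sup ile S s ->
  is_sup le (LO S) (ilo s) /\ is_inf le (HI S) (ihi s).
Proof.
  intros HS Hs. destruct (dcpo_comp HS) as [p [q [Hpq [Hp [Hq Hsup]]]]].
  assert (H1 : ile s (mkI Hpq)) by (apply (proj2 Hs); apply (proj1 Hsup)).
  assert (H2 : ile (mkI Hpq) s) by (apply (proj2 Hsup); apply (proj1 Hs)).
  apply IX_le_iff in H1. apply IX_le_iff in H2.
  cbn [mkI ilo ihi proj1_sig fst snd] in H1, H2.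
  replace (ilo s) with p by (apply asy; tauto).
  replace (ihi s) with q by (apply asy; tauto).
  auto.
Qed.

Lemma core {S s a b} : directed ile S -> is_sup ile S s -> wb a (ilo s) -> wb (ihi s) b ->
  exists d, S d /\ le a (ilo d) /\ le (ihi d) b.
Proof.
  intros HS Hs Ha Hb. destruct (sup_comp HS Hs) as [HL HH].
  destruct (Ha (LO S) (ilo s) (LO_dir HS) HL (rf _)) as [l [[i [Hi <-]] Hai]].
  destruct (proj1 (Hbc1 _ _) Hb (HI S) (ihi s) (HI_fil HS) HH (rf _)) as [h [[j [Hj <-]] Hjb]].
  destruct (proj2 HS i j Hi Hj) as [k [Hk [Hik Hjk]]].
  apply IX_le_iff in Hik. apply IX_le_iff in Hjk.
  exists k; split; auto. split; [apply (tr _ (ilo i)); [exact Hai | tauto] | apply (tr _ (ihi j)); [tauto | exact Hjb]].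
Qed.

Lemma SD (E F : X -> Prop) (j : I) : directed le E -> is_sup le E (ilo j) ->
  filtered le F -> is_inf le F (ihi j) ->
  directed ile (fun i => E (ilo i) /\ F (ihi i)) /\ is_sup ile (fun i => E (ilo i) /\ F (ihi i)) j.
Proof.
  intros HE HEs HF HFi.
  assert (Hef : forall e y, E e -> F y -> le e y).
  { intros e y He Hy. apply (tr _ (ilo j)); [apply (proj1 HEs); auto|].
    apply (tr _ (ihi j)); [apply lohi | apply (proj1 HFi); auto]. }
  split; [split|split].
  - destruct (proj1 HE) as [e He]. destruct (proj1 HF) as [y Hy].
    exists (mkI (Hef e y He Hy)). split; auto.
  - intros i1 i2 [E1 F1] [E2 F2].
    destruct (proj2 HE _ _ E1 E2) as [e [He [H1 H2]]].
    destruct (proj2 HF _ _ F1 F2) as [y [Hy [H3 H4]]].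
    exists (mkI (Hef e y He Hy)). split. split; auto.
    split; apply IX_le_iff; cbn [mkI ilo ihi proj1_sig fst snd]; auto.
  - intros i [Ei Fi]. apply IX_le_iff. split; [apply (proj1 HEs) | apply (proj1 HFi)]; auto.
  - intros u Hu. apply IX_le_iff. split.
    + apply (proj2 HEs). intros e He. destruct (proj1 HF) as [y Hy].
      exact (proj1 (proj1 (IX_le_iff _ _) (Hu (mkI (Hef e y He Hy)) (conj He Hy)))).
    + apply (proj2 HFi). intros y Hy. destruct (proj1 HE) as [e He].
      exact (proj2 (proj1 (IX_le_iff _ _) (Hu (mkI (Hef e y He Hy)) (conj He Hy)))).
Qed.

Lemma SDwb (j : I) : directed ile (fun i => wb (ilo i) (ilo j) /\ wb (ihi j) (ihi i)) /\
  is_sup ile (fun i => wb (ilo i) (ilo j) /\ wb (ihi j) (ihi i)) j.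
Proof.
  apply (SD (fun e => wb e (ilo j)) (fun y => wb (ihi j) y)).
  apply ddown. apply ddown. apply Hbc2. apply Hbc2.
Qed.

Lemma wb_IX (i j : I) : way_below ile i j <-> wb (ilo i) (ilo j) /\ wb (ihi j) (ihi i).
Proof.
  split.
  - intros H. destruct (SDwb j) as [Hd Hs].
    destruct (H _ j Hd Hs (proj2 (IX_le_iff j j) (conj (rf _) (rf _)))) as [k [[Hk1 Hk2] Hik]].
    apply IX_le_iff in Hik. split.
    + eapply le_wb_trans; [apply Hik | exact Hk1].
    + eapply wb_le_trans; [exact Hk2 | apply Hik].
  - intros [H1 H2] S s HS Hs Hjs. apply IX_le_iff in Hjs.
    destruct (@core S s (ilo i) (ihi i) HS Hs) as [d [Hd [Hd1 Hd2]]].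
    + eapply wb_le_trans; [exact H1 | apply Hjs].
    + eapply le_wb_trans; [apply Hjs | exact H2].
    + exists d; split; auto. apply IX_le_iff; auto.
Qed.

Lemma IX_domain : domain ile.
Proof.
  split.
  - exists (fun _ => True). intros j. exists (fun i => wb (ilo i) (ilo j) /\ wb (ihi j) (ihi i)).
    split; [|apply SDwb]. intros d Hd; split; auto. apply wb_IX; auto.
  - intros S HS. destruct (dcpo_comp HS) as [p [q [Hpq [_ [_ H]]]]]. eauto.
Qed.

Lemma sc_omega : second_countable (interval_open le) -> omega_continuous ile.
Proof.
  intros [Bn [HBo HB]].
  set (pick := fun n => match excluded_middle_informative (exists x, Bn n x) with
     | left h => Some (proj1_sig (constructive_indefinite_description _ h))
     | right _ => None end).
  assert (Hpick : forall n z, Bn n z -> exists x, pick n = Some x /\ Bn n x).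
  { intros n z Hz. unfold pick. destruct (excluded_middle_informative _) as [h|h].
    - destruct (constructive_indefinite_description _ h) as [x Hx]; simpl. eauto.
    - exfalso; eauto. }
  set (C := fun x => exists n, pick n = Some x).
  assert (HC : forall a c, wb a c -> exists e, C e /\ wb a e /\ wb e c).
  { intros a c Hac. destruct (interp_lo Hac) as [z [Haz Hzc]].
    assert (Wo : interval_open le (fun y => wb a y /\ wb y c)).
    { intros y [Hay Hyc]. destruct (interp_lo Hay) as [a' [Haa' Ha'y]].
      destruct (interp_hi Hyc) as [c' [Hyc' Hc'c]]. exists a', c'.
      split; [auto | split; [auto |]]. intros y0 H1 H2. split.
      - exact (le_wb_trans (wb_le Haa') H1).
      - exact (wb_le_trans H2 (wb_le Hc'c)). }
    destruct (HB _ z Wo (conj Haz Hzc)) as [n [Hnz Hn]].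
    destruct (Hpick n z Hnz) as [x [Hpx Hx]].
    exists x. split. exists n; auto. apply Hn; auto. }
  assert (HE : forall c, directed le (fun e => C e /\ wb e c) /\ is_sup le (fun e => C e /\ wb e c) c).
  { intros c. split; [split|split].
    - destruct (ex_below c) as [d Hd]. destruct (HC d c Hd) as [e [Ce [_ He]]]. exists e; auto.
    - intros e1 e2 [_ H1] [_ H2].
      destruct (proj2 (proj1 (ddown c)) e1 e2 H1 H2) as [d3 [Hd3 [H13 H23]]].
      destruct (HC d3 c Hd3) as [e [Ce [Hd3e He]]].
      exists e; split; auto. split; apply (tr _ d3); auto; apply wb_le; auto.
    - intros e [_ He]; apply wb_le; auto.
    - intros u Hu. apply (proj2 (proj2 (ddown c))). intros d Hd.
      destruct (HC d c Hd) as [e [Ce [Hde He]]]. apply (tr _ e). apply wb_le; auto. apply Hu; auto. }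
  assert (HF : forall d, filtered le (fun y => C y /\ wb d y) /\ is_inf le (fun y => C y /\ wb d y) d).
  { intros d. split; [split|split].
    - destruct (ex_above d) as [g Hg]. destruct (HC d g Hg) as [e [Ce [He _]]]. exists e; auto.
    - intros y1 y2 [_ H1] [_ H2].
      destruct (proj2 (proj1 (Hbc2 d)) y1 y2 H1 H2) as [g [Hg [H1g H2g]]].
      destruct (HC d g Hg) as [e [Ce [Hde Heg]]].
      exists e; split; auto. split; apply (tr _ g); auto; apply wb_le; auto.
    - intros y [_ Hy]; apply wb_le; auto.
    - intros u Hu. apply (proj2 (proj2 (Hbc2 d))). intros g Hg.
      destruct (HC d g Hg) as [e [Ce [Hde Heg]]]. apply (tr _ e). apply Hu; auto. apply wb_le; auto. }
  set (P := fun (i : I) (nm : nat * nat) => pick (fst nm) = Some (ilo i) /\ pick (snd nm) = Some (ihi i)).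
  set (f := fun i => match excluded_middle_informative (exists nm, P i nm) with
     | left h => Cantor.to_nat (proj1_sig (constructive_indefinite_description _ h))
     | right _ => 0 end).
  assert (Hf : forall i, (exists nm, P i nm) -> exists nm, P i nm /\ f i = Cantor.to_nat nm).
  { intros i Hi. unfold f. destruct (excluded_middle_informative _) as [h|h].
    - destruct (constructive_indefinite_description _ h) as [nm Hnm]; simpl. eauto.
    - contradiction. }
  exists (fun i => C (ilo i) /\ C (ihi i)). split.
  - intros j. exists (fun i => (C (ilo i) /\ wb (ilo i) (ilo j)) /\ (C (ihi i) /\ wb (ihi j) (ihi i))).
    split.
    + intros d [[C1 W1] [C2 W2]]. split. split; auto. apply wb_IX; auto.
    + apply (SD (fun e => C e /\ wb e (ilo j)) (fun y => C y /\ wb (ihi j) y)); apply HE || apply HF.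
  - exists f. intros i j [[n1 Hn1] [m1 Hm1]] [[n2 Hn2] [m2 Hm2]] Hfij.
    destruct (Hf i) as [[a1 b1] [[Ha1 Hb1] E1]]. exists (n1, m1); split; auto.
    destruct (Hf j) as [[a2 b2] [[Ha2 Hb2] E2]]. exists (n2, m2); split; auto.
    rewrite E1, E2 in Hfij. apply Cantor.to_nat_inj in Hfij. injection Hfij as <- <-.
    simpl in *. apply IX_eq; congruence.
Qed.

Lemma omega_sc : omega_continuous ile -> second_countable (interval_open le).
Proof.
  intros [B [HB [f Hf]]].
  exists (fun n y => exists i, B i /\ f i = n /\ wb (ilo i) y /\ wb y (ihi i)). split.
  - intros n y [i [Bi [Hfi [H1 H2]]]]. destruct (interp_lo H1) as [a' [Ha' Ha'y]].
    destruct (interp_hi H2) as [b' [Hb' Hb'b]]. exists a', b'. split; [auto | split; [auto|]].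
    intros z Hz1 Hz2. exists i. split; [auto | split; [auto | split]].
    + exact (le_wb_trans (wb_le Ha') Hz1).
    + exact (wb_le_trans Hz2 (wb_le Hb'b)).
  - intros U x HU Ux. destruct (HU x Ux) as [a [b [Hax [Hxb Hab]]]].
    assert (Hle : le a b) by (apply (tr _ x); apply wb_le; auto).
    destruct (HB (mkI (rf x))) as [S [HS1 [HS2 HS3]]].
    assert (Hw : way_below ile (mkI Hle) (mkI (rf x))) by (apply wb_IX; auto).
    destruct (Hw S _ HS2 HS3 (proj2 (IX_le_iff (mkI (rf x)) (mkI (rf x))) (conj (rf x) (rf x)))) as [d [Hd Hdd]].
    destruct (HS1 d Hd) as [Bd Wd]. apply wb_IX in Wd. apply IX_le_iff in Hdd.
    exists (f d). split.
    + exists d. split; [auto | split; [auto | exact Wd]].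
    + intros y [i [Bi [Hfi [H1 H2]]]]. assert (i = d) by (apply Hf; auto). subst i.
      apply Hab.
      * exact (le_wb_trans (proj1 Hdd) H1).
      * exact (wb_le_trans H2 (proj2 Hdd)).
Qed.

Lemma homeo_part :
  (forall x y, singleton_interval Hpo x = singleton_interval Hpo y -> x = y) /\
   (forall i, maximal ile i <-> exists x, i = singleton_interval Hpo x) /\
   (forall U : X -> Prop, interval_open le U <->
      exists V, scott_open ile V /\ forall x, U x <-> V (singleton_interval Hpo x)).
Proof.
  split; [|split].
  - intros x y H. apply (f_equal (fun i => ilo i)) in H. exact H.
  - intros i. split.
    + intros H. exists (ilo i).
      assert (Hi : ile i (mkI (rf (ilo i)))) by (apply IX_le_iff; split; [apply rf | apply lohi]).
      specialize (H _ Hi). apply IX_eq; rewrite <- H; reflexivity.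
    + intros [x ->] y Hy. apply IX_le_iff in Hy. cbn [singleton_interval ilo ihi proj1_sig fst snd] in Hy.
      destruct Hy as [H1 H2]. apply IX_eq; cbn [singleton_interval ilo ihi proj1_sig fst snd].
      * apply asy; auto. apply (tr _ (ihi y)); auto. apply lohi.
      * apply asy; auto. apply (tr _ (ilo y)); auto. apply lohi.
  - intros U. split.
    + intros HU.
      exists (fun i => exists a b, (forall y, wb a y -> wb y b -> U y) /\ wb a (ilo i) /\ wb (ihi i) b).
      split; [split|].
      * intros i j [a [b [H [H1 H2]]]] Hij. apply IX_le_iff in Hij. exists a, b. split; auto. split.
        -- exact (wb_le_trans H1 (proj1 Hij)).
        -- exact (le_wb_trans (proj2 Hij) H2).
      * intros S s HS Hs [a [b [H [H1 H2]]]].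
        destruct (interp_lo H1) as [a' [Ha' Ha's]]. destruct (interp_hi H2) as [b' [Hb' Hb'b]].
        destruct (core HS Hs Ha's Hb') as [d [Hd [Hd1 Hd2]]].
        exists d. split; auto. exists a, b. split; auto. split.
        -- exact (wb_le_trans Ha' Hd1).
        -- exact (le_wb_trans Hd2 Hb'b).
      * intros x. split.
        -- intros Ux. destruct (HU x Ux) as [a [b [H1 [H2 H3]]]]. exists a, b; auto.
        -- intros [a [b [H [H1 H2]]]]. apply H; auto.
    + intros [V [[Hup Hsc] HUV]] x Ux. apply HUV in Ux.
      destruct (SDwb (singleton_interval Hpo x)) as [Hd Hs].
      destruct (Hsc _ _ Hd Hs Ux) as [d [[Hd1 Hd2] Vd]].
      exists (ilo d), (ihi d). split; [exact Hd1 | split; [exact Hd2 |]].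
      intros y Hy1 Hy2. apply HUV. apply (Hup d); auto.
      apply IX_le_iff; split; apply wb_le; auto.
Qed.

End GH.

Theorem mainTheorem3 (X : Type) (le : X -> X -> Prop) (Hpo : is_poset le) :
  globally_hyperbolic le ->
  domain (IX_le le) /\
  (forall i j : IX le,
     way_below (IX_le le) i j <-> way_below le (ilo i) (ilo j) /\ way_below le (ihi j) (ihi i)) /\
  (second_countable (interval_open le) <-> omega_continuous (IX_le le)) /\
  ((forall x y, singleton_interval Hpo x = singleton_interval Hpo y -> x = y) /\
   (forall i, maximal (IX_le le) i <-> exists x, i = singleton_interval Hpo x) /\
   (forall U : X -> Prop, interval_open le U <->
      exists V, scott_open (IX_le le) V /\ forall x, U x <-> V (singleton_interval Hpo x))).
Proof.
  intros [_ [[Hc [H1 H2]] Hk]].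
  split; [|split; [|split]].
  - eapply IX_domain; eauto.
  - intros i j. eapply wb_IX; eauto.
  - split; [eapply sc_omega | eapply omega_sc]; eauto.
  - eapply homeo_part; eauto.
Qed.
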